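(* Let $\Gamma>1$ and let $(\rho_L,u_L,v_L,p_L)$, $(\rho_R,u_R,v_R,p_R)$ be two states with $\rho_{L},\rho_R,p_L,p_R>0$ and $u_L^2+v_L^2<1$, $u_R^2+v_R^2<1$. Set $W=1/\sqrt{1-u^2-v^2}$ at each state and $z_1=\rho$, $z_2=\rho/p$, $z_3=u$, $z_4=v$. Write $L_x=\mathcal L_x(z_3,z_4)$, $L_y=\mathcal L_y(z_3,z_4)$, $\alpha=1+\frac{1}{(\Gamma-1)\{\!\{z_2\}\!\}^{\ln}}$ and \[ Q=\{\!\{z_2\}\!\}\{\!\{W\}\!\}^2+\{\!\{z_2\}\!\}\big(\{\!\{z_3\}\!\}\{\!\{W\}\!\}L_x-\{\!\{uW\}\!\}L_x+\{\!\{z_4\}\!\}\{\!\{W\}\!\}L_y-\{\!\{vW\}\!\}L_y\big). \] Define the $x$-directional flux $\tilde{\mathbf F}=(\tilde F_1,\tilde F_2,\tilde F_3,\tilde F_4)^T$ by \[ \tilde F_1=\{\!\{z_1\}\!\}^{\ln}\{\!\{uW\}\!\}, \] \[ \tilde F_2=Q^{-1}\Big\{\alpha\{\!\{z_2\}\!\}L_x\tilde F_1+\{\!\{z_1\}\!\}\big(\{\!\{W\}\!\}^2-\{\!\{vW\}\!\}L_y\big)+\{\!\{z_1\}\!\}\{\!\{W\}\!\}\big(\{\!\{z_3\}\!\}L_x+\{\!\{z_4\}\!\}L_y\big)\Big\}, \] \[ \tilde F_3=Q^{-1}\Big\{\alpha\{\!\{z_2\}\!\}L_y\tilde F_1+\{\!\{z_1\}\!\}\{\!\{uW\}\!\}L_y\Big\},\qquad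 \tilde F_4=\{\!\{W\}\!\}^{-1}\big(\alpha\tilde F_1+\{\!\{uW\}\!\}\tilde F_2+\{\!\{vW\}\!\}\tilde F_3\big), \] and the $y$-directional flux $\tilde{\mathbf G}=(\tilde G_1,\tilde G_2,\tilde G_3,\tilde G_4)^T$ by \[ \tilde G_1=\{\!\{z_1\}\!\}^{\ln}\{\!\{vW\}\!\},\qquad \tilde G_2=Q^{-1}\Big\{\alpha\{\!\{z_2\}\!\}L_x\tilde G_1+\{\!\{z_1\}\!\}\{\!\{vW\}\!\}L_x\Big\}, \] \[ \tilde G_3=Q^{-1}\Big\{\alpha\{\!\{z_2\}\!\}L_y\tilde G_1+\{\!\{z_1\}\!\}\big(\{\!\{W\}\!\}^2-\{\!\{uW\}\!\}L_x\big)+\{\!\{z_1\}\!\}\{\!\{W\}\!\}\big(\{\!\{z_3\}\!\}L_x+\{\!\{z_4\}\!\}L_y\big)\Big\}, \] \[ \tilde G_4=\{\!\{W\}\!\}^{-1}\big(\alpha\tilde G_1+\{\!\{uW\}\!\}\tilde G_2+\{\!\{vW\}\!\}\tilde G_3\big). \] Then $Q=\{\!\{z_2\}\!\}W_LW_R>0$, so both fluxes are well defined, and they satisfy the entropy conservation conditions \[ [\![\mathbf V]\!]^T\tilde{\mathbf F}=[\![\psi_x]\!],\qquad [\![\mathbf V]\!]^T\tilde{\mathbf G}=[\![\psi_y]\!]. \] Moreover both fluxes are consistent: if the left and right states coincide, then $\tilde{\mathbf F}=\mathbf F(\mathbf U)$ and $\tilde{\mathbf G}=\mathbf G(\mathbf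 U)$ at that state.
   Context: Two-dimensional special relativistic hydrodynamics (speed of light $1$) with ideal equation of state $p=(\Gamma-1)\rho e$: $\mathbf U=(D,m_x,m_y,E)^T$ with $D=\rho W$, $(m_x,m_y)=\rho hW^2(u,v)$, $E=\rho hW^2-p$, $W=1/\sqrt{1-u^2-v^2}$, $h=1+\Gamma p/((\Gamma-1)\rho)$; fluxes $\mathbf F=(Du,\,m_xu+p,\,m_yu,\,m_x)^T$, $\mathbf G=(Dv,\,m_xv,\,m_yv+p,\,m_y)^T$. With $S=\ln p-\Gamma\ln\rho$, the entropy variables are $\mathbf V=\big(\frac{\Gamma-S}{\Gamma-1}+\frac{\rho}{p},\ \frac{\rho Wu}{p},\ \frac{\rho Wv}{p},\ -\frac{\rho W}{p}\big)^T$ and the potentials are $\psi_x=\rho Wu$, $\psi_y=\rho Wv$ (corresponding to the entropy $\eta=-\rho WS/(\Gamma-1)$ with fluxes $q_x=-\rho uWS/(\Gamma-1)$, $q_y=-\rho vWS/(\Gamma-1)$). For a quantity $a$ with values $a_L,a_R$: $[\![a]\!]=a_R-a_L$, $\{\!\{a\}\!\}=(a_L+a_R)/2$ (e.g. $\{\!\{uW\}\!\}=(u_LW_L+u_RW_R)/2$), and for positive $a$ the logarithmic mean $\{\!\{a\}\!\}^{\ln}=[\![a]\!]/[\![\ln a]\!]$ if $a_L\ne a_R$, $=a_L$ if $a_L=a_R$. The Lorentz means are $\mathcal L_x(u,v)=\dfrac{u_L+u_R}{\sqrt{1-u_L^2-v_L^2}\sqrt{1-u_R^2-v_R^2}\big(\sqrt{1-u_L^2-v_L^2}+\sqrt{1-u_R^2-v_R^2}\big)}$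 and $\mathcal L_y(u,v)$ the same with numerator $v_L+v_R$; they satisfy $[\![W]\!]=\mathcal L_x[\![u]\!]+\mathcal L_y[\![v]\!]$. *)

(* Defs.v *)
From Stdlib Require Import Reals.
Open Scope R_scope.

Record state := mkState { rho : R; vx : R; vy : R; pr : R }.

Definition admissible (s : state) : Prop :=
  0 < rho s /\ 0 < pr s /\ vx s ^ 2 + vy s ^ 2 < 1.

Definition lorentz (s : state) : R := 1 / sqrt (1 - vx s ^ 2 - vy s ^ 2).

Definition avg (aL aR : R) : R := (aL + aR) / 2.
Definition jump (aL aR : R) : R := aR - aL.
Definition logmean (aL aR : R) : R :=
  if Req_EM_T aL aR then aL else (aR - aL) / (ln aR - ln aL).

Definition z1 (s : state) : R := rho s.
Definition z2 (s : state) : R := rho s / pr s.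
Definition z3 (s : state) : R := vx s.
Definition z4 (s : state) : R := vy s.

Definition Lx (sL sR : state) : R :=
  (vx sL + vx sR) /
  (sqrt (1 - vx sL ^ 2 - vy sL ^ 2) * sqrt (1 - vx sR ^ 2 - vy sR ^ 2) *
   (sqrt (1 - vx sL ^ 2 - vy sL ^ 2) + sqrt (1 - vx sR ^ 2 - vy sR ^ 2))).
Definition Ly (sL sR : state) : R :=
  (vy sL + vy sR) /
  (sqrt (1 - vx sL ^ 2 - vy sL ^ 2) * sqrt (1 - vx sR ^ 2 - vy sR ^ 2) *
   (sqrt (1 - vx sL ^ 2 - vy sL ^ 2) + sqrt (1 - vx sR ^ 2 - vy sR ^ 2))).

Definition avgW (sL sR : state) : R := avg (lorentz sL) (lorentz sR).
Definition avguW (sL sR : state) : R := avg (vx sL * lorentz sL) (vx sR * lorentz sR).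
Definition avgvW (sL sR : state) : R := avg (vy sL * lorentz sL) (vy sR * lorentz sR).
Definition avgz1 (sL sR : state) : R := avg (z1 sL) (z1 sR).
Definition avgz2 (sL sR : state) : R := avg (z2 sL) (z2 sR).
Definition avgz3 (sL sR : state) : R := avg (z3 sL) (z3 sR).
Definition avgz4 (sL sR : state) : R := avg (z4 sL) (z4 sR).

Definition alpha (G : R) (sL sR : state) : R :=
  1 + 1 / ((G - 1) * logmean (z2 sL) (z2 sR)).

Definition Qden (sL sR : state) : R :=
  avgz2 sL sR * avgW sL sR ^ 2 +
  avgz2 sL sR * (avgz3 sL sR * avgW sL sR * Lx sL sR - avguW sL sR * Lx sL sR
                 + avgz4 sL sR * avgW sL sR * Ly sL sR - avgvW sL sR * Ly sL sR).

Definition vec4 := (R * R * R * R)%type.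

Definition dot4 (a b : vec4) : R :=
  let '(a1, a2, a3, a4) := a in let '(b1, b2, b3, b4) := b in
  a1 * b1 + a2 * b2 + a3 * b3 + a4 * b4.

Definition jump4 (a b : vec4) : vec4 :=
  let '(a1, a2, a3, a4) := a in let '(b1, b2, b3, b4) := b in
  (b1 - a1, b2 - a2, b3 - a3, b4 - a4).

Definition Ftilde (G : R) (sL sR : state) : vec4 :=
  let Q := Qden sL sR in
  let a := alpha G sL sR in
  let F1 := logmean (z1 sL) (z1 sR) * avguW sL sR in
  let F2 := / Q * (a * avgz2 sL sR * Lx sL sR * F1
              + avgz1 sL sR * (avgW sL sR ^ 2 - avgvW sL sR * Ly sL sR)
              + avgz1 sL sR * avgW sL sR * (avgz3 sL sR * Lx sL sR + avgz4 sL sR * Ly sL sR)) in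
  let F3 := / Q * (a * avgz2 sL sR * Ly sL sR * F1
              + avgz1 sL sR * avguW sL sR * Ly sL sR) in
  let F4 := / avgW sL sR * (a * F1 + avguW sL sR * F2 + avgvW sL sR * F3) in
  (F1, F2, F3, F4).

Definition Gtilde (G : R) (sL sR : state) : vec4 :=
  let Q := Qden sL sR in
  let a := alpha G sL sR in
  let G1 := logmean (z1 sL) (z1 sR) * avgvW sL sR in
  let G2 := / Q * (a * avgz2 sL sR * Lx sL sR * G1
              + avgz1 sL sR * avgvW sL sR * Lx sL sR) in
  let G3 := / Q * (a * avgz2 sL sR * Ly sL sR * G1
              + avgz1 sL sR * (avgW sL sR ^ 2 - avguW sL sR * Lx sL sR)
              + avgz1 sL sR * avgW sL sR * (avgz3 sL sR * Lx sL sR + avgz4 sL sR * Ly sL sR)) in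
  let G4 := / avgW sL sR * (a * G1 + avguW sL sR * G2 + avgvW sL sR * G3) in
  (G1, G2, G3, G4).

Definition enthalpy (G : R) (s : state) : R := 1 + G * pr s / ((G - 1) * rho s).
Definition specS (G : R) (s : state) : R := ln (pr s) - G * ln (rho s).

Definition entV (G : R) (s : state) : vec4 :=
  ((G - specS G s) / (G - 1) + rho s / pr s,
   rho s * lorentz s * vx s / pr s,
   rho s * lorentz s * vy s / pr s,
   - (rho s * lorentz s / pr s)).

Definition psix (s : state) : R := rho s * lorentz s * vx s.
Definition psiy (s : state) : R := rho s * lorentz s * vy s.

Definition consD (s : state) : R := rho s * lorentz s.
Definition consMx (G : R) (s : state) : R := rho s * enthalpy G s * lorentz s ^ 2 * vx s.
Definition consMy (G : R) (s : state) : R := rho s * enthalpy G s * lorentz s ^ 2 * vy s.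
Definition consE (G : R) (s : state) : R := rho s * enthalpy G s * lorentz s ^ 2 - pr s.

Definition physF (G : R) (s : state) : vec4 :=
  (consD s * vx s, consMx G s * vx s + pr s, consMy G s * vx s, consMx G s).
Definition physG (G : R) (s : state) : vec4 :=
  (consD s * vy s, consMx G s * vy s, consMy G s * vy s + pr s, consMy G s).

(* Main.v *)
Require Import Defs.
From Stdlib Require Import Reals Lra.
Open Scope R_scope.

Lemma ln_div' x y : 0 < x -> 0 < y -> ln (x / y) = ln x - ln y.
Proof.
  intros. unfold Rdiv. rewrite ln_mult, ln_Rinv; try lra.
  apply Rinv_0_lt_compat; lra.
Qed.

Lemma sq_pos s : admissible s -> 0 < sqrt (1 - vx s ^ 2 - vy s ^ 2).
Proof. intros [? [? ?]]. apply sqrt_lt_R0. lra. Qed.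

Lemma sq_sq s : admissible s ->
  sqrt (1 - vx s ^ 2 - vy s ^ 2) * sqrt (1 - vx s ^ 2 - vy s ^ 2) = 1 - vx s ^ 2 - vy s ^ 2.
Proof. intros [? [? ?]]. apply sqrt_sqrt. lra. Qed.

Lemma lor_pos s : admissible s -> 0 < lorentz s.
Proof.
  intros H. unfold lorentz. pose proof (sq_pos s H).
  unfold Rdiv. rewrite Rmult_1_l. apply Rinv_0_lt_compat; lra.
Qed.

Lemma hjump sL sR : admissible sL -> admissible sR ->
  lorentz sR - lorentz sL = Lx sL sR * (vx sR - vx sL) + Ly sL sR * (vy sR - vy sL).
Proof.
  intros HL HR. pose proof (sq_pos _ HL). pose proof (sq_pos _ HR).
  pose proof (sq_sq _ HL) as EL. pose proof (sq_sq _ HR) as ER.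
  unfold lorentz, Lx, Ly.
  set (a := sqrt (1 - vx sL ^ 2 - vy sL ^ 2)) in *.
  set (b := sqrt (1 - vx sR ^ 2 - vy sR ^ 2)) in *.
  transitivity ((a*a - b*b)/(a*b*(a+b))).
  - field. lra.
  - rewrite EL, ER. field. lra.
Qed.

Lemma Qeq sL sR : admissible sL -> admissible sR ->
  Qden sL sR = avgz2 sL sR * lorentz sL * lorentz sR.
Proof.
  intros HL HR. pose proof (hjump _ _ HL HR) as h.
  unfold Qden, avgz2, avgz3, avgz4, avgW, avguW, avgvW, avg, z3, z4.
  set (WL := lorentz sL) in *. set (WR := lorentz sR) in *.
  set (lx := Lx sL sR) in *. set (ly := Ly sL sR) in *.
  clearbody WL WR lx ly.
  assert (WR = WL + lx * (vx sR - vx sL) + ly * (vy sR - vy sL)) by lra.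
  subst WR. field.
Qed.

Lemma logmean_jump a b : 0 < a -> 0 < b -> logmean a b * (ln b - ln a) = b - a.
Proof.
  intros. unfold logmean. destruct (Req_EM_T a b).
  - subst. ring.
  - assert (ln b - ln a <> 0).
    { intro E. apply n. apply ln_inv; lra. }
    field. auto.
Qed.

Lemma logmean_pos a b : 0 < a -> 0 < b -> 0 < logmean a b.
Proof.
  intros. unfold logmean. destruct (Req_EM_T a b). lra.
  destruct (Rlt_or_le a b).
  - assert (ln a < ln b) by (apply ln_increasing; lra).
    apply Rdiv_lt_0_compat; lra.
  - assert (b < a) by lra. assert (ln b < ln a) by (apply ln_increasing; lra).
    replace ((b - a) / (ln b - ln a)) with ((a - b) / (ln a - ln b)) by (field; lra).
    apply Rdiv_lt_0_compat; lra.
Qed.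

Lemma J1eq G sL sR : 1 < G -> admissible sL -> admissible sR ->
  (G - specS G sR) / (G - 1) + rho sR / pr sR - ((G - specS G sL) / (G - 1) + rho sL / pr sL)
  = (ln (rho sR) - ln (rho sL)) + alpha G sL sR * (z2 sR - z2 sL).
Proof.
  intros HG [rL [pL _]] [rR [pR _]].
  assert (Hz : (ln (z2 sR) - ln (z2 sL)) / (G - 1) = (alpha G sL sR - 1) * (z2 sR - z2 sL)).
  { unfold alpha. pose proof (logmean_jump (z2 sL) (z2 sR)) as LJ.
    assert (0 < z2 sL) by (unfold z2; apply Rdiv_lt_0_compat; lra).
    assert (0 < z2 sR) by (unfold z2; apply Rdiv_lt_0_compat; lra).
    pose proof (logmean_pos _ _ H H0).
    rewrite <- LJ by lra. field. split; lra. }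
  unfold specS. unfold z2 in Hz. rewrite !ln_div' in Hz by lra.
  unfold z2.
  assert (E : (G - (ln (pr sR) - G * ln (rho sR))) / (G - 1) - (G - (ln (pr sL) - G * ln (rho sL))) / (G - 1)
      = (ln (rho sR) - ln (rho sL)) + (ln (rho sR) - ln (pr sR) - (ln (rho sL) - ln (pr sL))) / (G - 1)).
  { field. lra. }
  lra.
Qed.

Lemma entx G sL sR : 1 < G -> admissible sL -> admissible sR ->
  dot4 (jump4 (entV G sL) (entV G sR)) (Ftilde G sL sR) = jump (psix sL) (psix sR).
Proof.
  intros HG HL HR.
  pose proof (Qeq _ _ HL HR) as Hq. pose proof (J1eq _ _ _ HG HL HR) as HJ1.
  pose proof (hjump _ _ HL HR) as h.
  pose proof (lor_pos _ HL). pose proof (lor_pos _ HR).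
  destruct HL as [rL [pL _]]. destruct HR as [rR [pR _]].
  pose proof (logmean_jump (z1 sL) (z1 sR) rL rR) as LJ. unfold z1 in LJ.
  unfold dot4, jump4, entV, Ftilde. cbv beta iota zeta.
  rewrite Hq, HJ1.
  assert (HJ : forall X, ((ln (rho sR) - ln (rho sL)) + alpha G sL sR * (z2 sR - z2 sL)) * (logmean (z1 sL) (z1 sR) * X)
     = (rho sR - rho sL) * X + alpha G sL sR * (z2 sR - z2 sL) * (logmean (z1 sL) (z1 sR) * X)).
  { intros X. unfold z1. rewrite <- LJ. ring. }
  rewrite HJ. clear HJ HJ1 LJ Hq.
  unfold jump, psix, avgz1, avgz2, avgz3, avgz4, avgW, avguW, avgvW, avg, z1, z2, z3, z4.
  set (WL := lorentz sL) in *. set (WR := lorentz sR) in *.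
  set (lx := Lx sL sR) in *. set (ly := Ly sL sR) in *.
  set (lr := logmean (rho sL) (rho sR)). set (a := alpha G sL sR).
  clearbody WL WR lx ly lr a.
  assert (WR = WL + lx * (vx sR - vx sL) + ly * (vy sR - vy sL)) by lra.
  subst WR.
  assert (0 < rho sL * pr sR) by (apply Rmult_lt_0_compat; lra).
  assert (0 < rho sR * pr sL) by (apply Rmult_lt_0_compat; lra).
  field. repeat split; lra.
Qed.

Lemma enty G sL sR : 1 < G -> admissible sL -> admissible sR ->
  dot4 (jump4 (entV G sL) (entV G sR)) (Gtilde G sL sR) = jump (psiy sL) (psiy sR).
Proof.
  intros HG HL HR.
  pose proof (Qeq _ _ HL HR) as Hq. pose proof (J1eq _ _ _ HG HL HR) as HJ1.
  pose proof (hjump _ _ HL HR) as h.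
  pose proof (lor_pos _ HL). pose proof (lor_pos _ HR).
  destruct HL as [rL [pL _]]. destruct HR as [rR [pR _]].
  pose proof (logmean_jump (z1 sL) (z1 sR) rL rR) as LJ. unfold z1 in LJ.
  unfold dot4, jump4, entV, Gtilde. cbv beta iota zeta.
  rewrite Hq, HJ1.
  assert (HJ : forall X, ((ln (rho sR) - ln (rho sL)) + alpha G sL sR * (z2 sR - z2 sL)) * (logmean (z1 sL) (z1 sR) * X)
     = (rho sR - rho sL) * X + alpha G sL sR * (z2 sR - z2 sL) * (logmean (z1 sL) (z1 sR) * X)).
  { intros X. unfold z1. rewrite <- LJ. ring. }
  rewrite HJ. clear HJ HJ1 LJ Hq.
  unfold jump, psiy, avgz1, avgz2, avgz3, avgz4, avgW, avguW, avgvW, avg, z1, z2, z3, z4.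
  set (WL := lorentz sL) in *. set (WR := lorentz sR) in *.
  set (lx := Lx sL sR) in *. set (ly := Ly sL sR) in *.
  set (lr := logmean (rho sL) (rho sR)). set (a := alpha G sL sR).
  clearbody WL WR lx ly lr a.
  assert (WR = WL + lx * (vx sR - vx sL) + ly * (vy sR - vy sL)) by lra.
  subst WR.
  assert (0 < rho sL * pr sR) by (apply Rmult_lt_0_compat; lra).
  assert (0 < rho sR * pr sL) by (apply Rmult_lt_0_compat; lra).
  field. repeat split; lra.
Qed.

Lemma tuple4 (F1 F2 F3 W a uW vW P1 P2 P3 P4 : R) :
  F1 = P1 -> F2 = P2 -> F3 = P3 -> / W * (a * P1 + uW * P2 + vW * P3) = P4 ->
  ((F1, F2, F3, / W * (a * F1 + uW * F2 + vW * F3)) : vec4) = (P1, P2, P3, P4).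
Proof. intros; subst; reflexivity. Qed.

Lemma logmean_same a : logmean a a = a.
Proof. unfold logmean. destruct (Req_EM_T a a); [reflexivity| congruence]. Qed.

Lemma consx G s : 1 < G -> admissible s -> Ftilde G s s = physF G s.
Proof.
  intros HG HS. pose proof (Qeq _ _ HS HS) as Hq.
  pose proof (sq_pos _ HS) as Hs. pose proof (sq_sq _ HS) as Es.
  destruct HS as [r [p _]].
  unfold Ftilde. cbv zeta. rewrite Hq. unfold alpha. rewrite !logmean_same.
  unfold physF, consD, consMx, consMy, enthalpy.
  apply tuple4.
  - unfold avguW, avg, z1, lorentz. field. lra.
  - unfold avguW, avgvW, avgW, avgz1, avgz2, avgz3, avgz4, avg, z1, z2, z3, z4, lorentz, Lx, Ly.
    set (q := sqrt (1 - vx s ^ 2 - vy s ^ 2)) in *. clearbody q.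
    field. repeat split; lra.
  - unfold avguW, avgvW, avgW, avgz1, avgz2, avgz3, avgz4, avg, z1, z2, z3, z4, lorentz, Lx, Ly.
    set (q := sqrt (1 - vx s ^ 2 - vy s ^ 2)) in *. clearbody q.
    field. repeat split; lra.
  - unfold avguW, avgvW, avgW, avg, lorentz.
    set (q := sqrt (1 - vx s ^ 2 - vy s ^ 2)) in *. clearbody q.
    unfold z2.
    transitivity (vx s * ((1 + 1/((G-1)*(rho s/pr s)))*rho s + pr s) + rho s*(1 + G * pr s / ((G - 1) * rho s))*vx s*(1/q)^2*(vx s^2 + vy s^2)).
    + field. lra.
    + replace (vx s ^ 2 + vy s ^ 2) with (1 - q*q) by lra.
      field. repeat split; lra.
Qed.

Lemma consy G s : 1 < G -> admissible s -> Gtilde G s s = physG G s.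
Proof.
  intros HG HS. pose proof (Qeq _ _ HS HS) as Hq.
  pose proof (sq_pos _ HS) as Hs. pose proof (sq_sq _ HS) as Es.
  destruct HS as [r [p _]].
  unfold Gtilde. cbv zeta. rewrite Hq. unfold alpha. rewrite !logmean_same.
  unfold physG, consD, consMx, consMy, enthalpy.
  apply tuple4.
  - unfold avgvW, avg, z1, lorentz. field. lra.
  - unfold avguW, avgvW, avgW, avgz1, avgz2, avgz3, avgz4, avg, z1, z2, z3, z4, lorentz, Lx, Ly.
    set (q := sqrt (1 - vx s ^ 2 - vy s ^ 2)) in *. clearbody q.
    field. repeat split; lra.
  - unfold avguW, avgvW, avgW, avgz1, avgz2, avgz3, avgz4, avg, z1, z2, z3, z4, lorentz, Lx, Ly.
    set (q := sqrt (1 - vx s ^ 2 - vy s ^ 2)) in *. clearbody q.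
    field. repeat split; lra.
  - unfold avguW, avgvW, avgW, avg, lorentz.
    set (q := sqrt (1 - vx s ^ 2 - vy s ^ 2)) in *. clearbody q.
    unfold z2.
    transitivity (vy s * ((1 + 1/((G-1)*(rho s/pr s)))*rho s + pr s) + rho s*(1 + G * pr s / ((G - 1) * rho s))*vy s*(1/q)^2*(vx s^2 + vy s^2)).
    + field. lra.
    + replace (vx s ^ 2 + vy s ^ 2) with (1 - q*q) by lra.
      field. repeat split; lra.
Qed.

Theorem mainTheorem2 (G : R) (sL sR : state) :
  1 < G -> admissible sL -> admissible sR ->
  Qden sL sR = avgz2 sL sR * lorentz sL * lorentz sR /\
  0 < Qden sL sR /\
  dot4 (jump4 (entV G sL) (entV G sR)) (Ftilde G sL sR) = jump (psix sL) (psix sR) /\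
  dot4 (jump4 (entV G sL) (entV G sR)) (Gtilde G sL sR) = jump (psiy sL) (psiy sR) /\
  (sL = sR -> Ftilde G sL sR = physF G sL /\ Gtilde G sL sR = physG G sL).
Proof.
  intros HG HL HR.
  pose proof (Qeq _ _ HL HR) as Hq.
  split; [exact Hq|].
  split.
  { rewrite Hq. pose proof (lor_pos _ HL). pose proof (lor_pos _ HR).
    destruct HL as [rL [pL _]]. destruct HR as [rR [pR _]].
    assert (0 < avgz2 sL sR).
    { unfold avgz2, avg, z2.
      assert (0 < rho sL / pr sL) by (apply Rdiv_lt_0_compat; lra).
      assert (0 < rho sR / pr sR) by (apply Rdiv_lt_0_compat; lra). lra. }
    apply Rmult_lt_0_compat; [apply Rmult_lt_0_compat|]; lra. }
  split; [apply entx; auto|].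
  split; [apply enty; auto|].
  intros <-. split; [apply consx|apply consy]; auto.
Qed.
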